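(* Let $t(n)=\frac{\log n}{\log\log n}$. No deterministic max-of-$t(n)$ online bipartite matching algorithm can achieve an asymptotic approximation ratio greater than $1/2$.
   Context: Online one-sided bipartite matching: offline vertices are known in advance; $n$ online vertices arrive one at a time in adversarial order, each with its set of offline neighbours, and the algorithm must irrevocably match it to an unmatched neighbour or leave it unmatched; the goal is a maximum-size matching. A max-of-$k$ algorithm runs $k$ deterministic online algorithms in parallel, producing $k$ matchings, and outputs the largest. The asymptotic approximation ratio of $\mathbb{A}$ is $\liminf_{n}\inf_{I\in\mathcal{I}_n} v(\mathbb{A},I)/v(I)$, with $v(I)$ the maximum matching size. *)

(* Defs.v *)
From HB Require Import structures.
From mathcomp Require Import all_boot all_order all_algebra.
From mathcomp Require Import all_classical all_reals all_analysis.
Set Implicit Arguments. Unset Strict Implicit. Unset Printing Implicit Defensive.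
Import Order.TTheory GRing.Theory Num.Theory.

(* An instance with n online vertices and m offline vertices 'I_m:
   the i-th online vertex (in arrival order) has neighbour set I`_i. *)
Definition instance (n m : nat) := n.-tuple {set 'I_m}.

(* A deterministic online algorithm (for offline vertex set 'I_m):
   given the neighbour sets of the previously arrived online vertices
   (its own past decisions are determined by these) and the neighbour
   set of the current online vertex, it proposes an offline vertex to
   match to, or None.  A proposal that is not an unmatched neighbour
   is treated as leaving the vertex unmatched. *)
Definition online_alg (m : nat) := seq {set 'I_m} -> {set 'I_m} -> option 'I_m.

Fixpoint run_alg (m : nat) (A : online_alg m) (past : seq {set 'I_m})
    (matched : {set 'I_m}) (future : seq {set 'I_m}) : nat :=
  match future with
  | [::] => 0
  | N :: rest =>
      match A past N with
      | Some v =>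
          if (v \in N) && (v \notin matched)
          then (run_alg A (rcons past N) (v |: matched) rest).+1
          else run_alg A (rcons past N) matched rest
      | None => run_alg A (rcons past N) matched rest
      end
  end.

Definition alg_value (n m : nat) (A : online_alg m) (I : instance n m) : nat :=
  run_alg A [::] finset.set0 I.

Definition is_matching (n m : nat) (I : instance n m) (f : {ffun 'I_n -> option 'I_m}) : bool :=
  [forall i, if f i is Some v then v \in tnth I i else true] &&
  [forall i, forall j, (f i != None) && (f i == f j) ==> (i == j)].

Definition matching_size (n m : nat) (f : {ffun 'I_n -> option 'I_m}) : nat :=
  #|[set i | f i != None]|.

Definition opt_value (n m : nat) (I : instance n m) : nat :=
  \max_(f : {ffun 'I_n -> option 'I_m} | is_matching I f) matching_size f.

Definition maxk_value (n m k : nat) (As : k.-tuple (online_alg m)) (I : instance n m) : nat :=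
  \max_(A <- As) alg_value A I.

Definition maxk_family (k : nat -> nat) := forall n m : nat, (k n).-tuple (online_alg m).

Local Open Scope ring_scope.
Local Open Scope ereal_scope.

Definition worst_ratio (R : realType) (k : nat -> nat) (F : maxk_family k) (n : nat) : \bar R :=
  ereal_inf [set x | exists m (I : instance n m),
     (0 < opt_value I)%N /\
     x = ((maxk_value (F n m) I)%:R / (opt_value I)%:R : R)%:E].

Definition asymp_ratio (R : realType) (k : nat -> nat) (F : maxk_family k) : \bar R :=
  limn_einf (worst_ratio R F).

Definition tfun (R : realType) (n : nat) : R := ln (n%:R) / ln (ln (n%:R)).

(* Main.v *)
Require Import Defs.
From HB Require Import structures.
From mathcomp Require Import all_boot all_order all_algebra.
From mathcomp Require Import zify.
Set Implicit Arguments. Unset Strict Implicit. Unset Printing Implicit Defensive.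

Section Adv.
Variables (m k : nat) (As : k.-tuple (online_alg m)).

Record st := St { past : seq {set 'I_m}; Ms : {ffun 'I_k -> {set 'I_m}}; Us : {set 'I_m} }.

Definition upd (A : online_alg m) p (N M : {set 'I_m}) : {set 'I_m} :=
  match A p N with
  | Some v => if (v \in N) && (v \notin M) then v |: M else M
  | None => M end.

Definition cls (M : {ffun 'I_k -> {set 'I_m}}) (e : 'I_m) : {set 'I_k} := [set j | e \in M j].
Definition pool s (sg : {set 'I_k}) := [set e | (e \notin Us s) && (cls (Ms s) e == sg)].
Definition nextN s := if [pick sg | k < #|pool s sg|] is Some sg then pool s sg else set0.
Definition newMs s := [ffun j => upd (tnth As j) (past s) (nextN s) (Ms s j)].
Definition rsv s := [pick e in nextN s | cls (newMs s) e == cls (Ms s) e].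
Definition step s := St (rcons (past s) (nextN s)) (newMs s)
   (if rsv s is Some r then r |: Us s else Us s).
Fixpoint gen t s := match t with 0 => [::] | t'.+1 => nextN s :: gen t' (step s) end.
Definition st0 := St [::] [ffun => set0] set0.

Lemma run_cons A p (M N : {set 'I_m}) r :
  run_alg A p M (N :: r) + #|M| = run_alg A (rcons p N) (upd A p N M) r + #|upd A p N M|.
Proof.
rewrite /upd /=. case: (A p N) => [v|] //. case: ifP => // /andP[_ vM].
rewrite cardsU1 vM /=. lia.
Qed.

Lemma gen_run t s j :
  run_alg (tnth As j) (past s) (Ms s j) (gen t s) + #|Ms s j| = #|Ms (iter t step s) j|.
Proof.
elim: t s => [|t IH] s; first by rewrite /= add0n.
rewrite (iterSr t step s) -IH /= run_cons /newMs ffunE //.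
Qed.

Lemma size_gen t s : size (gen t s) = t.
Proof. by elim: t s => [|t IH] s //=; rewrite IH. Qed.

Lemma nth_gen t s i d : (i < t)%N -> nth d (gen t s) i = nextN (iter i step s).
Proof.
elim: t s i => [|t IH] s [|i] //= hi.
by rewrite IH // -iterSr.
Qed.

Lemma upd_sub A p (N M : {set 'I_m}) : M \subset upd A p N M.
Proof.
rewrite /upd; case: (A p N) => [v|]; last exact: subxx.
case: ifP => _; [exact: subsetUr | exact: subxx].
Qed.

Lemma upd_new A p (N M : {set 'I_m}) : #|upd A p N M :\: M| <= 1.
Proof.
rewrite /upd; case: (A p N) => [v|]; last by rewrite setDv cards0.
case: ifP => _; last by rewrite setDv cards0.
rewrite setDUl setDv setU0.
apply: leq_trans (subset_leq_card (subsetDl _ _)) _. by rewrite cards1.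
Qed.

Lemma upd0 A p (M : {set 'I_m}) : upd A p set0 M = M.
Proof. by rewrite /upd; case: (A p set0) => // v; rewrite inE. Qed.

Lemma upd_cases A p (N M : {set 'I_m}) : upd A p N M = M \/
  exists v, [/\ v \in N, v \notin M & upd A p N M = v |: M].
Proof.
rewrite /upd; case: (A p N) => [v|]; last by left.
case: ifP => [/andP[h1 h2]|_]; last by left.
by right; exists v.
Qed.

Lemma card_bigcup_le (I : finType) (P : pred I) (F : I -> {set 'I_m}) :
  #|\bigcup_(i | P i) F i| <= \sum_(i | P i) #|F i|.
Proof.
apply: (big_ind2 (fun (A : {set 'I_m}) (n : nat) => #|A| <= n)).
- by rewrite cards0.
- move=> A1 n1 A2 n2 h1 h2; rewrite cardsU; apply: leq_trans (leq_subr _ _) _.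
  exact: leq_add.
- by [].
Qed.

Lemma changed_le s : #|[set e | cls (newMs s) e != cls (Ms s) e]| <= k.
Proof.
apply: leq_trans (_ : #|\bigcup_(j | true) (newMs s j :\: Ms s j)| <= k).
  apply: subset_leq_card; apply/subsetP => e; rewrite inE => hne.
  apply/bigcupP.
  have: [exists j, (e \in newMs s j) && (e \notin Ms s j)].
    apply: contraNT hne => /existsPn H; apply/eqP/setP => j; rewrite !inE.
    move: (H j) (subsetP (upd_sub (tnth As j) (past s) (nextN s) (Ms s j)) e).
    rewrite /newMs ffunE.
    move=> h1 h2; apply/idP/idP => [ha|//]; by apply: contraNT h1 => hb; rewrite ha hb.
  by case/existsP=> j hj; exists j => //; rewrite inE andbC.
apply: leq_trans (card_bigcup_le _ _) _.
apply: leq_trans (_ : \sum_(j < k) 1 <= k); last by rewrite sum1_card card_ord.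
apply: leq_sum => j _; rewrite /newMs ffunE; exact: upd_new.
Qed.

Definition fin s := [forall sg, #|pool s sg| <= k].

Lemma rsv_cases s :
  (fin s /\ nextN s = set0 /\ rsv s = None) \/
  (exists sg r, [/\ nextN s = pool s sg, rsv s = Some r, r \in pool s sg &
       cls (newMs s) r = cls (Ms s) r]).
Proof.
rewrite /rsv /nextN.
case: pickP => [sg Hsg | Hn].
  right; exists sg.
  case: pickP => [r /andP[hr /eqP hc] | Hr].
    by exists r.
  exfalso.
  have: pool s sg \subset [set e | cls (newMs s) e != cls (Ms s) e].
    apply/subsetP => e he; rewrite inE; move: (Hr e); rewrite /nextN.
    by rewrite he /=; move->.
  move/subset_leq_card; rewrite leqNgt.
  by rewrite (leq_ltn_trans (changed_le s) Hsg).
left; split.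
  by apply/forallP => sg; rewrite leqNgt Hn.
split => //.
by case: pickP => // e /andP[]; rewrite inE.
Qed.

Definition inv s := forall j, 2 * #|Ms s j| <= #|Us s :|: Ms s j|.

Lemma inv_step s : inv s -> inv (step s).
Proof.
move=> Hs j; rewrite /step /=.
case: (rsv_cases s) => [[_ [hN ->]] | [sg [r [hN -> hr hc]]]].
  by rewrite /newMs ffunE hN upd0.
have := Hs j.
have hnew := upd_cases (tnth As j) (past s) (nextN s) (Ms s j).
have eqn : newMs s j = upd (tnth As j) (past s) (nextN s) (Ms s j) by rewrite /newMs ffunE.
rewrite eqn.
case: hnew => [-> | [v [hv hvM hu]]].
  move=> h; apply: leq_trans h _; apply: subset_leq_card.
  by apply: setSU; apply: subsetUr.
rewrite hu in eqn *.
move: hr hv; rewrite hN !inE => /andP[rU /eqP rc] /andP[vU /eqP vc].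
have jn : j \notin sg by rewrite -vc inE.
have rM : r \notin Ms s j by apply: contra jn => h; rewrite -rc inE.
have rv : r != v.
  apply: contra jn => /eqP erv. by rewrite -rc -hc inE eqn erv setU11.
have -> : (r |: Us s) :|: (v |: Ms s j) = r |: (v |: (Us s :|: Ms s j)).
  by apply/setP => x; rewrite !inE; case: (x == r); case: (x == v); case: (x \in Us s).
rewrite !cardsU1 !inE (negbTE rv) (negbTE rU) (negbTE rM) (negbTE vU) (negbTE hvM) /=.
lia.
Qed.

Lemma fin_nextN s : fin s -> nextN s = set0.
Proof.
move=> /forallP hf; rewrite /nextN; case: pickP => [sg H|//].
by move: (hf sg); rewrite leqNgt H.
Qed.

Lemma fin_rsv s : fin s -> rsv s = None.
Proof.
move=> h; rewrite /rsv (fin_nextN h); case: pickP => // e /andP[]; by rewrite inE.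
Qed.

Lemma fin_step s : fin s -> step s = St (rcons (past s) set0) (Ms s) (Us s).
Proof.
move=> h; rewrite /step (fin_rsv h); congr St; first by rewrite (fin_nextN h).
by apply/ffunP => j; rewrite /newMs ffunE (fin_nextN h) upd0.
Qed.

Lemma fin_fin s : fin s -> fin (step s).
Proof. by move=> h; rewrite (fin_step h). Qed.

Lemma rsv_in s r : rsv s = Some r ->
  [/\ r \in nextN s, r \notin Us s & Us (step s) = r |: Us s].
Proof.
case: (rsv_cases s) => [[_ [_ ->]] // | [sg [r' [hN hr hin _]]]].
rewrite hr => -[<-]; move: (hin); rewrite inE => /andP[hU _].
by split => //; [rewrite hN | rewrite /step hr].
Qed.

Lemma Us_step_card s : #|Us (step s)| = (rsv s != None) + #|Us s|.
Proof.
case E: (rsv s) => [r|]; last by rewrite /step E.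
by have [_ hU ->] := rsv_in E; rewrite cardsU1 hU.
Qed.

Lemma Us_step_sub s : Us s \subset Us (step s).
Proof.
case E: (rsv s) => [r|]; last by rewrite /step E.
by have [_ _ ->] := rsv_in E; apply: subsetUr.
Qed.

Notation S i := (iter i step st0).

Lemma term t : fin (S t) \/ #|Us (S t)| = t.
Proof.
elim: t => [|t IH]; first by right; rewrite /= cards0.
rewrite [iter t.+1 _ _]/=.
case: (boolP (fin (S t))) => hf; first by left; apply: fin_fin.
right; case: IH => [hf'|IH]; first by rewrite hf' in hf.
case: (rsv_cases (S t)) => [[hf' _]|[sg [r [_ E _ _]]]]; first by rewrite hf' in hf.
by rewrite Us_step_card E IH.
Qed.

Lemma Us_card t : #|Us (S t)| = \sum_(i < t) (rsv (S i) != None).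
Proof.
elim: t => [|t IH]; first by rewrite big_ord0 /= cards0.
by rewrite big_ord_recr /= Us_step_card IH addnC.
Qed.

Lemma Us_mono i d : Us (S i) \subset Us (S (i + d)).
Proof.
elim: d => [|d IH]; first by rewrite addn0 subxx.
rewrite addnS; apply: subset_trans IH _; exact: Us_step_sub.
Qed.

Lemma rsv_inj i j r : rsv (S i) = Some r -> rsv (S j) = Some r -> (i < j)%N -> False.
Proof.
move=> Ei Ej lij.
have [_ _ h1] := rsv_in Ei.
have [_ h2 _] := rsv_in Ej.
have := Us_mono i.+1 (j - i.+1); rewrite subnKC // => /subsetP /(_ r).
have hr : r \in Us (S i.+1) by rewrite [iter i.+1 _ _]/= h1 setU11.
by move=> /(_ hr); rewrite (negbTE h2).
Qed.

Lemma fin_bound s : fin s -> #|~: Us s| <= k * 2 ^ k.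
Proof.
move=> /forallP hf.
apply: leq_trans (_ : #|\bigcup_(sg | true) pool s sg| <= _).
  apply: subset_leq_card; apply/subsetP => e; rewrite inE => he.
  by apply/bigcupP; exists (cls (Ms s) e) => //; rewrite inE he eqxx.
apply: leq_trans (card_bigcup_le _ _) _.
apply: leq_trans (_ : \sum_(sg : {set 'I_k}) k <= _).
  by apply: leq_sum => sg _; apply: hf.
rewrite sum_nat_const -cardsT -powersetT card_powerset cardsT card_ord mulnC //.
Qed.

Lemma adversary n : (m < n)%N -> exists I : instance n m,
  (2 * maxk_value As I <= m)%N /\ (m <= opt_value I + k * 2 ^ k)%N.
Proof.
move=> mn.
have szP : size (gen n st0) == n by rewrite size_gen.
pose I : instance n m := Tuple szP.
exists I.
have halg j : alg_value (tnth As j) I = #|Ms (S n) j|.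
  rewrite /alg_value -gen_run /= ffunE cards0 addn0 //.
have hinv : inv (S n).
  elim: n {mn szP I halg} => [|t IH] /=; last exact: inv_step.
  by move=> j; rewrite ffunE cards0.
have hfin : fin (S n).
  case: (term n) => // hc; exfalso.
  have := max_card (Us (S n)); rewrite card_ord hc leqNgt mn //.
split.
  rewrite /maxk_value big_tuple.
  apply: (big_ind (fun x => 2 * x <= m)%N) => //.
    move=> x y hx hy; lia.
  move=> j _; rewrite halg.
  apply: leq_trans (hinv j) _; apply: leq_trans (max_card _) _; by rewrite card_ord.
pose f : {ffun 'I_n -> option 'I_m} := [ffun t : 'I_n => rsv (S t)].
have hmatch : is_matching I f.
  apply/andP; split.
    apply/forallP => i; rewrite ffunE (tnth_nth set0) nth_gen //.
    case E: (rsv (S i)) => [v|] //.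
    by have [] := rsv_in E.
  apply/forallP => i; apply/forallP => j; apply/implyP => /andP[hn /eqP he].
  rewrite !ffunE in hn he.
  case E: (rsv (S i)) hn he => [r|] // _ /esym Ej.
  case: (ltngtP i j) => [lij|lji|/val_inj -> //].
    by exfalso; apply: (rsv_inj E Ej lij).
  by exfalso; apply: (rsv_inj Ej E lji).
have hopt : (#|Us (S n)| <= opt_value I)%N.
  apply: leq_trans (leq_bigmax_cond _ hmatch).
  rewrite Us_card /matching_size -sum1_card big_mkcond /=.
  rewrite [X in _ <= X]big_mkcond; apply: eq_leq; apply: eq_bigr => i _; rewrite inE ffunE; by case: (rsv _).
have hc := cardsC (Us (S n)); rewrite card_ord in hc.
have := fin_bound hfin; lia.
Qed.

End Adv.

From mathcomp Require Import all_classical all_reals all_analysis.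
From mathcomp Require Import lra.
Import Order.TTheory GRing.Theory Num.Theory.
Local Open Scope ring_scope.

Lemma B_sq (R : realType) (k : nat) :
  ((k * 2 ^ k)%N%:R : R) ^+ 2 <= expR (4 * k%:R).
Proof.
set x : R := k%:R.
have x0 : 0 <= x by rewrite /x ler0n.
have hx : x <= expR x by have := expR_ge1Dx x; lra.
have e1 : 2 <= expR 1 :> R by have := expR_ge1Dx (1 : R); lra.
have h2 : (2 ^ k)%N%:R <= expR x :> R.
  rewrite natrX /x -[X in expR X]mulr1 expRM_natl.
  apply: lerXn2r => //; rewrite nnegrE ?expR_ge0 //; lra.
rewrite natrM -/x.
have hB : x * (2 ^ k)%N%:R <= expR x ^+ 2.
  rewrite expr2; apply: ler_pM => //; rewrite ler0n //.
rewrite expRM_natl.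
have hB0 : 0 <= x * (2 ^ k)%N%:R by rewrite mulr_ge0 // ler0n.
have : (x * (2 ^ k)%N%:R) ^+ 2 <= (expR x ^+ 2) ^+ 2.
  by apply: lerXn2r => //; rewrite nnegrE // exprn_ge0 // expR_ge0.
by rewrite -exprM.
Qed.

Lemma asymp (R : realType) (k : nat -> nat) (N : nat) (eps : R) :
  (forall n, (N <= n)%N -> (k n)%:R <= tfun R n) -> 0 < eps ->
  exists N', forall n, (N' <= n)%N ->
   [/\ (0 < n)%N, ((k n * 2 ^ k n)%N%:R * (1 + 2 * eps) <= 2 * eps * (n.-1)%:R :> R)
     & (k n * 2 ^ k n < n.-1)%N].
Proof.
move=> hN e0.
set c := 2 * eps / (1 + 2 * eps).
have d0 : 0 < 1 + 2 * eps by lra.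
have c0 : 0 < c by rewrite divr_gt0 //; lra.
have c1 : c < 1 by rewrite ltr_pdivrMr //; lra.
have cE : c * (1 + 2 * eps) = 2 * eps by rewrite divfK // gt_eqF.
set X : R := Num.max (expR (expR 4)) (Num.max 2 (4 / c ^+ 2)).
exists (maxn N (Num.truncn X).+1).
move=> n; rewrite geq_max => /andP[hNn hXn].
set x : R := n%:R.
have hxX : X < x.
  by apply: lt_le_trans (truncnS_gt X) _; rewrite /x ler_nat.
have hx1 : expR (expR 4) <= x by apply: le_trans (ltW hxX); rewrite le_max lexx.
have hx2 : 2 <= x by apply: le_trans (ltW hxX); rewrite /X !le_max lexx orbT.
have hx3 : 4 / c ^+ 2 <= x by apply: le_trans (ltW hxX); rewrite /X !le_max lexx !orbT.
have xpos : 0 < x by lra.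
have n0 : (0 < n)%N by rewrite -(ltr_nat R) -/x.
have ex : expR (ln x) = x by rewrite lnK // posrE.
have hL : expR 4 <= ln x.
  rewrite -[X in X <= _](expRK (expR 4)) ler_ln // posrE ?expR_gt0 //.
have Lpos : 0 < ln x by apply: lt_le_trans hL; exact: expR_gt0.
have hLL : 4 <= ln (ln x).
  by rewrite -[X in X <= _](expRK 4) ler_ln // posrE ?expR_gt0 //.
have hk := hN n hNn; rewrite /tfun -/x in hk.
rewrite ler_pdivlMr in hk; last lra.
set kap : R := (k n)%:R in hk.
have kap0 : 0 <= kap by rewrite /kap ler0n.
have h4k : 4 * kap <= ln x by nra.
have hex : expR (4 * kap) <= x by rewrite -[leRHS]ex ler_expR.
have hsq := B_sq R (k n).
rewrite -/kap in hsq.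
set B : R := (k n * 2 ^ k n)%N%:R in hsq *.
have B0 : 0 <= B by rewrite /B ler0n.
have hBx : B ^+ 2 <= x by apply: le_trans hsq hex.
have hcx : 4 <= x * c ^+ 2 by rewrite -ler_pdivrMr // exprn_gt0.
have hy : x <= (c * x / 2) ^+ 2 by nra.
have hBc : B <= c * x / 2.
  have hB2 : B ^+ 2 <= (c * x / 2) ^+ 2 by apply: le_trans hBx hy.
  have cx0 : 0 <= c * x / 2 by nra.
  nra.
have xE : x = (n.-1)%:R + 1 by rewrite /x natr1 prednK.
have xE' : (n.-1)%:R = x - 1 :> R by rewrite xE; lra.
split => //.
  rewrite xE'.
  have : B <= c * (x - 1) by nra.
  move=> h; rewrite -cE; nra.
rewrite -(ltr_nat R) -/B xE'.
have : B <= c * (x - 1) by nra.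
nra.
Qed.


Lemma worst_bound (R : realType) k (F : maxk_family k) n (eps : R) :
  0 < eps -> (0 < n)%N ->
  ((k n * 2 ^ k n)%N%:R * (1 + 2 * eps) <= 2 * eps * (n.-1)%:R) ->
  (k n * 2 ^ k n < n.-1)%N ->
  (worst_ratio R F n <= (2^-1 + eps)%:E)%E.
Proof.
move=> e0 n0 hB hlt.
have mn : (n.-1 < n)%N by rewrite prednK.
have [I [h1 h2]] := adversary (F n n.-1) mn.
have opos : (0 < opt_value I)%N by lia.
apply: (@le_trans _ _ (((maxk_value (F n n.-1) I)%:R / (opt_value I)%:R : R)%:E)).
  by apply: ereal_inf_lbound; exists n.-1, I; split.
rewrite lee_fin.
have o0 : 0 < (opt_value I)%:R :> R by rewrite ltr0n.
rewrite ler_pdivrMr //.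
set a : R := (maxk_value (F n n.-1) I)%:R.
set o : R := (opt_value I)%:R.
set m : R := (n.-1)%:R.
set B : R := (k n * 2 ^ k n)%N%:R in hB.
have ha : 2 * a <= m.
  by rewrite /a /m -[2]/(2%:R) -natrM ler_nat.
have ho : m <= o + B.
  by rewrite /o /B /m -natrD ler_nat.
nra.
Qed.

Theorem corollary1 (R : realType) (k : nat -> nat) (F : maxk_family k) :
  (exists N : nat, forall n : nat, (N <= n)%N -> ((k n)%:R <= tfun R n)) ->
  (asymp_ratio R F <= (2^-1 : R)%:E)%E.
Proof.
case=> N hN.
rewrite /asymp_ratio limn_einf_lim.
rewrite (cvg_lim (@ereal_hausdorff R) (@cvg_einfs_sup R (worst_ratio R F))).
apply/lee_addgt0Pr => e e0.
apply: ge_ereal_sup => _ [M _ <-].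
have [N' HN'] := @asymp R k N e hN e0.
apply: (@le_trans _ _ (worst_ratio R F (maxn M N'))).
  by apply: ereal_inf_lbound; exists (maxn M N') => //=; rewrite leq_maxl.
have [h0 hB hlt] := HN' (maxn M N') (leq_maxr _ _).
rewrite -EFinD; exact: worst_bound.
Qed.
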